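(* Let $(X_1,Y_1,Y'_1),\ldots,(X_n,Y_n,Y'_n)$ be a sequence of independent triples of Bernoulli random variables (triples mutually independent; variables within a triple may be dependent) such that $\mathbb{E}[X_i]=p_i$, $\mathbb{E}[Y_i]=q_i$, $\mathbb{E}[Y'_i]=q'_i$ and $\mathbb{E}[X_iY_i]=0$ (i.e., $X_i$ and $Y_i$ are never both $1$). Suppose further that for each $i$ either (a) $q'_i=0$, or (b) $q_i=1-p_i$, and $X_i=\mathbf{1}(\theta_i<p_i)$ and $Y'_i=\mathbf{1}(\theta_i<q'_i)$ for a threshold $\theta_i$ chosen uniformly in $[0,1]$. Let $X=\sum_i X_i$, $Y=\sum_i(Y_i+Y'_i)$, $\mu_x=\mathbb{E}[X]$, $\mu_y=\mathbb{E}[Y]$. If $\mu_x+\mu_y>1$, then $$\frac{\mu_x-1}{\mu_x+\mu_y-1}\le\mathbb{E}\Big[\frac{X}{X+Y}\Big]\le\frac{\mu_x}{\mu_x+\mu_y-1}.$$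
   Context: Convention: in the expression $\frac{X}{X+Y}$, the value $0/0$ is interpreted as $1$ for the left inequality and as $0$ for the right inequality. $\mathbf{1}(\cdot)$ denotes the indicator of an event. *)

(* Defs.v *)
From HB Require Import structures.
From mathcomp Require Import all_boot all_order all_algebra.
From mathcomp Require Import all_classical all_reals all_analysis.
Set Implicit Arguments. Unset Strict Implicit. Unset Printing Implicit Defensive.
Import Order.TTheory GRing.Theory Num.Theory.
Local Open Scope classical_set_scope.
Local Open Scope ring_scope.

Definition triple_event d (T : measurableType d) (R : realType) n
  (X Y Z : 'I_n -> T -> R) (i : 'I_n) (A B C : set R) : set T :=
  X i @^-1` A `&` Y i @^-1` B `&` Z i @^-1` C.

(* Mutual independence of the random triples (X_i, Y_i, Z_i), i < n:
   product rule over every subfamily S of indices, for events generated by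
   measurable rectangles (a pi-system generating the sigma-algebra of each
   triple). *)
Definition indep_triples d (T : measurableType d) (R : realType)
  (P : probability T R) n (X Y Z : 'I_n -> T -> R) : Prop :=
  forall (S : {set 'I_n}) (A B C : 'I_n -> set R),
    (forall i, measurable (A i) /\ measurable (B i) /\ measurable (C i)) ->
    P (\bigcap_(i in [set j | j \in S]) triple_event X Y Z i (A i) (B i) (C i))
    = (\prod_(i in S) P (triple_event X Y Z i (A i) (B i) (C i)))%E.

Definition bernoulli_valued (T : Type) (R : realType) (f : T -> R) : Prop :=
  forall t, f t = 0 \/ f t = 1.

(* X/(X+Y) with the convention 0/0 = 1 (left inequality) ... *)
Definition ratio_left (R : realType) (x y : R) : R :=
  if x + y == 0 then 1 else x / (x + y).
(* ... and 0/0 = 0 (right inequality). *)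
Definition ratio_right (R : realType) (x y : R) : R :=
  if x + y == 0 then 0 else x / (x + y).

(* Main.v *)
Require Import Defs.
From HB Require Import structures.
From mathcomp Require Import all_boot all_order all_algebra.
From mathcomp Require Import all_classical all_reals all_analysis.
From mathcomp Require Import ring lra.
Set Implicit Arguments. Unset Strict Implicit. Unset Printing Implicit Defensive.
Import Order.TTheory GRing.Theory Num.Theory.

Module FinDev.
Local Open Scope ring_scope.

Section Pt.
Variable R : realFieldType.
Definition h (a t : R) := (1 - a) / (1 + t) + a / (2 + t).

Lemma h_ge0 a t : 0 <= a <= 1 -> 0 <= t -> 0 <= h a t.
Proof.
move=> /andP[a0 a1] t0; rewrite /h addr_ge0 // divr_ge0 //; lra.
Qed.

Lemma h_anti a x y : 0 <= a <= 1 -> 0 <= y -> y <= x -> h a x <= h a y.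
Proof.
move=> /andP[a0 a1] y0 yx; rewrite /h.
have i1 : (1 + x)^-1 <= (1 + y)^-1 by rewrite lef_pV2 ?posrE; lra.
have i2 : (2 + x)^-1 <= (2 + y)^-1 by rewrite lef_pV2 ?posrE; lra.
rewrite lerD // ler_wpM2l //; lra.
Qed.

Lemma ptw k u a : 0 <= k -> 0 <= u -> 0 <= a <= 1 ->
  (k + a) * h a (k + u) + u * h a (k + u - 1) <= 1.
Proof.
move=> k0 u0 /andP[a0 a1].
have [->|u_neq0] := eqVneq u 0.
  rewrite mul0r !addr0 /h.
  have k1 : 0 < 1 + k by lra.
  have k2 : 0 < 2 + k by lra.
  have E : (k + a) * ((1 - a) / (1 + k) + a / (2 + k))
     = 1 - (1 - a) ^+ 2 / (1 + k) - a * (2 - a) / (2 + k).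
    by field; rewrite !gt_eqF.
  rewrite E.
  have : 0 <= (1 - a) ^+ 2 / (1 + k) by rewrite divr_ge0 ?exprn_ge0 //; lra.
  have : 0 <= a * (2 - a) / (2 + k) by rewrite divr_ge0 ?mulr_ge0 //; lra.
  lra.
have up : 0 < u by rewrite lt0r u_neq0.
have t0 : 0 < k + u by lra.
have E : (k + a) * h a (k + u) + u * h a (k + u - 1)
   = 1 - a ^+ 2 / ((1 + (k + u)) * (2 + (k + u)))
       - k * (1 - a) / ((k + u) * (1 + (k + u)))
       - k * a / ((1 + (k + u)) * (2 + (k + u))).
  rewrite /h.
  have -> : 1 + (k + u - 1) = k + u by ring.
  have -> : 2 + (k + u - 1) = 1 + (k + u) by ring.
  by field; rewrite !gt_eqF //; lra.
rewrite E.
have : 0 <= a ^+ 2 / ((1 + (k + u)) * (2 + (k + u))) by rewrite divr_ge0 ?mulr_ge0 ?exprn_ge0 //; lra.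
have : 0 <= k * (1 - a) / ((k + u) * (1 + (k + u))) by rewrite divr_ge0 ?mulr_ge0 //; lra.
have : 0 <= k * a / ((1 + (k + u)) * (2 + (k + u))) by rewrite divr_ge0 ?mulr_ge0 //; lra.
lra.
Qed.
End Pt.

Section FMs.
Variables (R : realFieldType) (n : nat) (S : finType) (pi : 'I_n -> S -> R).
Hypothesis pi_ge0 : forall i s, 0 <= pi i s.
Hypothesis pi_sum1 : forall i, \sum_s pi i s = 1.

Definition w (sg : {ffun 'I_n -> S}) := \prod_i pi i (sg i).
Definition Ew (G : {ffun 'I_n -> S} -> R) := \sum_sg w sg * G sg.

Lemma Ew1 : Ew (fun _ => 1) = 1.
Proof.
rewrite /Ew /w; under eq_bigr do rewrite mulr1.
rewrite -(bigA_distr_bigA (fun i s => pi i s)).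
by rewrite big1 // => i _; rewrite pi_sum1.
Qed.

Lemma w_ge0 sg : 0 <= w sg.
Proof. by apply: prodr_ge0 => i _. Qed.

Definition swp (j : 'I_n) (s s' : S) (sg : {ffun 'I_n -> S}) : {ffun 'I_n -> S} :=
  [ffun i => if i == j then (if sg i == s then s' else if sg i == s' then s else sg i) else sg i].

Lemma swpK j s s' : involutive (swp j s s').
Proof.
move=> sg; apply/ffunP => i; rewrite !ffunE.
case: eqP => // ->.
case: (eqVneq (sg j) s) => [->|ns]; first by rewrite eqxx; case: eqVneq.
case: (eqVneq (sg j) s') => [->|ns']; first by rewrite eqxx.
by rewrite (negPf ns) (negPf ns').
Qed.

Definition inv_at (j : 'I_n) (g : {ffun 'I_n -> S} -> R) :=
  forall sg sg' : {ffun 'I_n -> S}, (forall i, i != j -> sg i = sg' i) -> g sg = g sg'.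

Lemma Ew_factor j (f : S -> R) g : inv_at j g ->
  Ew (fun sg => f (sg j) * g sg) = (\sum_s pi j s * f s) * Ew g.
Proof.
move=> gj.
pose w' (sg : {ffun 'I_n -> S}) := \prod_(i | i != j) pi i (sg i).
have wE sg : w sg = pi j (sg j) * w' sg by rewrite /w (bigD1 j).
have w'j : inv_at j w'.
  by move=> sg sg' E; apply: eq_bigr => i ij; rewrite E.
pose A s := \sum_(sg : {ffun 'I_n -> S} | sg j == s) w' sg * g sg.
have AE s s' : A s = A s'.
  rewrite /A (reindex_inj (inv_inj (swpK j s s'))) /=.
  apply: eq_big => sg.
    rewrite ffunE eqxx; move: (sg j) => x.
    case: (eqVneq x s) => [->|ns]; first exact: eq_sym.
    case: (eqVneq x s') => [E|ns'] /=; first by subst; rewrite eqxx.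
    by rewrite (negPf ns).
  move=> _; have E : forall i, i != j -> swp j s s' sg i = sg i.
    by move=> i ij; rewrite ffunE (negPf ij).
  by rewrite (w'j _ _ E) (gj _ _ E).
have split (G : {ffun 'I_n -> S} -> R) : \sum_sg G sg = \sum_s \sum_(sg : {ffun 'I_n -> S} | sg j == s) G sg.
  by rewrite (partition_big (fun sg : {ffun 'I_n -> S} => sg j) predT).
have A0 s : A s = \sum_s' pi j s' * A s'.
  rewrite (eq_bigr (fun s' => pi j s' * A s)); last by move=> s' _; rewrite (AE s' s).
  by rewrite -big_distrl /= pi_sum1 mul1r.
rewrite /Ew split [in RHS]split big_distrl /=.
have -> : \sum_s \sum_(sg : {ffun 'I_n -> S} | sg j == s) w sg * (f (sg j) * g sg)
        = \sum_s pi j s * f s * A s.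
  apply: eq_bigr => s _.
  rewrite /A big_distrr /=; apply: eq_bigr => sg /eqP <-; rewrite wE; ring.
have -> : \sum_s \sum_(sg : {ffun 'I_n -> S} | sg j == s) w sg * g sg
        = \sum_s pi j s * A s.
  apply: eq_bigr => s _.
  rewrite /A big_distrr /=; apply: eq_bigr => sg /eqP <-; rewrite wE; ring.
case: (pickP (fun _ : S => true)) => [s0 _|none]; last first.
  have H := pi_sum1 j; rewrite big_pred0 // in H; by move/eqP: H; rewrite eq_sym oner_eq0.
rewrite -(A0 s0); apply: eq_bigr => s _; by rewrite (AE s s0).
Qed.

Lemma Ew_le F G : (forall sg, w sg != 0 -> F sg <= G sg) -> Ew F <= Ew G.
Proof.
move=> H; apply: ler_sum => sg _; have [->|nz] := eqVneq (w sg) 0; first by rewrite !mul0r.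
by rewrite ler_wpM2l ?w_ge0 ?H.
Qed.

Lemma Ew_eq F G : (forall sg, w sg != 0 -> F sg = G sg) -> Ew F = Ew G.
Proof.
move=> H; apply: eq_bigr => sg _; have [->|nz] := eqVneq (w sg) 0; first by rewrite !mul0r.
by rewrite H.
Qed.

Lemma EwD F G : Ew (fun sg => F sg + G sg) = Ew F + Ew G.
Proof. by rewrite /Ew -big_split /=; apply: eq_bigr => sg _; rewrite mulrDr. Qed.

Lemma EwZ c F : Ew (fun sg => c * F sg) = c * Ew F.
Proof. by rewrite /Ew big_distrr /=; apply: eq_bigr => sg _; rewrite mulrCA. Qed.

Lemma Ew_sum (I : finType) (P : pred I) F :
  Ew (fun sg => \sum_(i | P i) F i sg) = \sum_(i | P i) Ew (F i).
Proof.
rewrite /Ew (exchange_big) /=; apply: eq_bigr => sg _; by rewrite big_distrr.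
Qed.

Lemma Ew_at j f : Ew (fun sg => f (sg j)) = \sum_s pi j s * f s.
Proof.
have := @Ew_factor j f (fun _ => 1) (fun _ _ _ => erefl).
rewrite Ew1 mulr1 => <-; by apply: Ew_eq => sg _; rewrite mulr1.
Qed.

Lemma w_supp sg j : w sg != 0 -> pi j (sg j) != 0.
Proof.
apply: contraNneq => E; by rewrite /w (bigD1 j) //= E mul0r.
Qed.

Section H.
Variables (tot : S -> R) (c : 'I_n -> R).
Hypothesis tot_ge0 : forall s, 0 <= tot s.
Hypothesis c_ge0 : forall j, 0 <= c j.
Hypothesis supp : forall j s, pi j s != 0 -> tot s = c j \/ tot s = c j + 1.

Definition TJ (J : {set 'I_n}) (sg : {ffun 'I_n -> S}) := \sum_(j in J) tot (sg j).

Lemma TJ_ge0 J sg : 0 <= TJ J sg.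
Proof. by apply: sumr_ge0 => j _. Qed.

Lemma lemH J a : 0 <= a <= 1 ->
  (Ew (TJ J) + a) * Ew (fun sg => h a (TJ J sg)) <= 1.
Proof.
move=> a01.
pose k := \sum_(j in J) c j.
pose b j s := tot s - c j.
pose Eb j := \sum_s pi j s * b j s.
have EwT : Ew (TJ J) = k + \sum_(j in J) Eb j.
  rewrite /TJ Ew_sum /k -big_split /=; apply: eq_bigr => j _.
  rewrite Ew_at /Eb /b.
  under [in RHS]eq_bigr do rewrite mulrBr.
  by rewrite sumrB -big_distrl /= pi_sum1 mul1r addrC subrK.
have Eb_ge0 j : 0 <= Eb j.
  apply: sumr_ge0 => s _; have [->|nz] := eqVneq (pi j s) 0; first by rewrite mul0r.
  by rewrite mulr_ge0 ?pi_ge0 // /b; case: (supp nz) => ->; lra.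
have step j : j \in J ->
    Eb j * Ew (fun sg => h a (TJ J sg)) <= Ew (fun sg => b j (sg j) * h a (TJ J sg - 1)).
  move=> jJ.
  have TE sg : TJ J sg = tot (sg j) + TJ (J :\ j) sg.
    by rewrite /TJ (bigD1 j) //=; congr (_ + _); apply: eq_bigl => i; rewrite !inE andbC.
  apply: (@le_trans _ _ (Eb j * Ew (fun sg => h a (TJ (J :\ j) sg + c j)))).
    rewrite ler_wpM2l //; apply: Ew_le => sg nz.
    apply: h_anti => //; first by rewrite addr_ge0 ?TJ_ge0.
    rewrite TE; case: (supp (w_supp j nz)) => ->; lra.
  rewrite /Eb -Ew_factor.
    rewrite le_eqVlt; apply/orP; left; apply/eqP; apply: Ew_eq => sg nz; rewrite /b TE; case: (supp (w_supp j nz)) => ->.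
      by rewrite subrr !mul0r.
    congr (_ * h a _); ring.
  move=> sg sg' E; congr (h a (_ + _)); rewrite /TJ; apply: eq_bigr => i; rewrite !inE => /andP[ij _].
  by rewrite E.
rewrite EwT.
have -> : k + \sum_(j in J) Eb j + a = (k + a) + \sum_(j in J) Eb j by ring.
rewrite mulrDl.
apply: (@le_trans _ _ (Ew (fun sg => (k + a) * h a (TJ J sg) + (TJ J sg - k) * h a (TJ J sg - 1)))).
  rewrite (EwD (fun sg => (k + a) * h a (TJ J sg))) (EwZ (k + a) (fun sg => h a (TJ J sg))) lerD2l.
  rewrite (@Ew_eq (fun sg => (TJ J sg - k) * h a (TJ J sg - 1)) (fun sg => \sum_(j in J) b j (sg j) * h a (TJ J sg - 1))); last first.
    by move=> sg _; rewrite -big_distrl /= /b /TJ /k sumrB.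
  rewrite Ew_sum big_distrl /=; apply: ler_sum => j jJ; exact: step.
rewrite -[X in _ <= X]Ew1; apply: Ew_le => sg nz.
have Tk : k <= TJ J sg.
  rewrite /k /TJ; apply: ler_sum => j _; have := supp (w_supp j nz); case=> ->; lra.
have := @ptw _ k (TJ J sg - k) a (sumr_ge0 _ (fun j _ => c_ge0 j)).
have E : k + (TJ J sg - k) = TJ J sg by ring.
rewrite E subr_ge0; apply => //.
Qed.
End H.
End FMs.


Definition S3 := (bool * bool * bool)%type.

Lemma sumS3 (R : comRingType) (F : S3 -> R) : \sum_s F s =
  F (false,false,false) + F (false,false,true) + F (false,true,false) + F (false,true,true)
  + F (true,false,false) + F (true,false,true) + F (true,true,false) + F (true,true,true).
Proof.
rewrite (eq_bigr (fun p => F (p.1, p.2))); last by case.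
rewrite -(pair_bigA _ (fun a b => F (a, b))) /=.
rewrite (eq_bigr (fun p => \sum_j F ((p.1, p.2), j))); last by case.
rewrite -(pair_bigA _ (fun a b => \sum_j F ((a, b), j))) /=.
rewrite !big_bool /=; ring.
Qed.

Section Final.
Variables (R : realFieldType) (n : nat) (pi : 'I_n -> S3 -> R).
Hypothesis pi_ge0 : forall i s, 0 <= pi i s.
Hypothesis pi_sum1 : forall i, \sum_s pi i s = 1.

Definition cnt (s : S3) : nat := (s.1.1 + s.1.2 + s.2)%N.
Definition tot (s : S3) : R := (cnt s)%:R.
Definition xv (s : S3) : R := (s.1.1 : nat)%:R.
Definition yv (s : S3) : R := (s.1.2 + s.2)%N%:R.
Definition yv1 (s : S3) : R := (s.1.2 : nat)%:R.
Definition yv2 (s : S3) : R := (s.2 : nat)%:R.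

Definition p i := \sum_s pi i s * xv s.
Definition qq i := \sum_s pi i s * yv1 s.
Definition qp i := \sum_s pi i s * yv2 s.

Hypothesis H11 : forall i b, pi i (true, true, b) = 0.
Hypothesis Hcase : forall i, qp i = 0 \/
  (qq i = 1 - p i /\ (pi i (true, false, false) = 0 \/ pi i (false, true, true) = 0)).

Lemma cases i :
  (pi i (false,false,true) = 0 /\ pi i (false,true,true) = 0 /\ pi i (true,false,true) = 0
   /\ qp i = 0 /\ p i + qq i <= 1) \/
  (pi i (false,false,false) = 0 /\ pi i (false,false,true) = 0 /\ qq i = 1 - p i /\
   (pi i (true, false, false) = 0 \/ pi i (false, true, true) = 0)).
Proof.
have s1 := pi_sum1 i; rewrite sumS3 in s1.
have h1 := H11 i true; have h0 := H11 i false.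
have g := pi_ge0 i.
have := g (false,false,false); have := g (false,false,true); have := g (false,true,false);
have := g (false,true,true); have := g (true,false,false); have := g (true,false,true).
move=> ? ? ? ? ? ?.
case: (Hcase i) => [q0|[qE co]].
  left; move: q0; rewrite /qp /p /qq !sumS3 /yv2 /xv /yv1 /= => q0.
  lra.
right; move: qE; rewrite /qp /p /qq !sumS3 /yv2 /xv /yv1 /= => qE.
lra.
Qed.

Local Notation E := (Ew pi).
Definition T i (sg : {ffun 'I_n -> S3}) := TJ tot ([set: 'I_n] :\ i) sg.
Definition Sall (sg : {ffun 'I_n -> S3}) := TJ tot [set: 'I_n] sg.
Definition c j : R := if qp j == 0 then 0 else 1.

Lemma tot_ge0 s : 0 <= tot s. Proof. by rewrite /tot ler0n. Qed.
Lemma c_ge0 j : 0 <= c j. Proof. by rewrite /c; case: ifP. Qed.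

Ltac expand := rewrite /qp /p /qq !sumS3 /yv2 /xv /yv1 /=.

Lemma supp j s : pi j s != 0 -> tot s = c j \/ tot s = c j + 1.
Proof.
have s1 := pi_sum1 j; rewrite sumS3 in s1.
have h1 := H11 j true; have h0 := H11 j false.
have g := pi_ge0 j.
have := g (false,false,false); have := g (false,false,true); have := g (false,true,false);
have := g (false,true,true); have := g (true,false,false); have := g (true,false,true).
move=> ? ? ? ? ? ?.
rewrite /c; case: (eqVneq (qp j) 0) => [q0|q0].
  have : pi j (false,false,true) = 0 /\ pi j (false,true,true) = 0 /\ pi j (true,false,true) = 0.
    by move: q0; expand; lra.
  case=> [f1 [f2 f3]].
  by case: s => [[[] []] []]; rewrite /tot /cnt /= => nz;
    rewrite ?f1 ?f2 ?f3 ?h1 ?h0 ?eqxx // in nz; lra.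
have : pi j (false,false,false) = 0 /\ pi j (false,false,true) = 0.
  by case: (cases j) => [[_ [_ [_ [q0' _]]]]|[f1 [f2 _]]] //; rewrite q0' eqxx in q0.
case=> [f1 f2].
by case: s => [[[] []] []]; rewrite /tot /cnt /= => nz;
  rewrite ?f1 ?f2 ?h1 ?h0 ?eqxx // in nz; lra.
Qed.

Definition a1 (v : S3 -> R) s := if cnt s == 1%N then v s else 0.
Definition a2 (v : S3 -> R) s := if cnt s == 2%N then v s else 0.
Definition g0 (t : R) := (1 + t)^-1.
Definition g1 (t : R) := (2 + t)^-1.

Lemma Ew_ge0 F : (forall sg, 0 <= F sg) -> 0 <= E F.
Proof. move=> H; apply: sumr_ge0 => sg _; by rewrite mulr_ge0 ?w_ge0. Qed.

Lemma T_inv i : inv_at i (T i).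
Proof.
move=> sg sg' Ei; rewrite /T /TJ; apply: eq_bigr => j; rewrite !inE => /andP[ji _].
by rewrite Ei.
Qed.

Lemma SallE i sg : Sall sg = tot (sg i) + T i sg.
Proof.
rewrite /Sall /T /TJ (bigD1 i) ?inE //=; congr (_ + _).
by apply: eq_bigl => j; rewrite !inE andbT.
Qed.

Lemma T_ge0 i sg : 0 <= T i sg.
Proof. exact: TJ_ge0 tot_ge0 _ _. Qed.

Lemma decomp (v : S3 -> R) i : v (false,false,false) = 0 ->
  E (fun sg => v (sg i) / Sall sg) =
  (\sum_s pi i s * a1 v s) * E (fun sg => g0 (T i sg)) +
  (\sum_s pi i s * a2 v s) * E (fun sg => g1 (T i sg)).
Proof.
move=> v0.
have f0 : inv_at i (fun sg => g0 (T i sg)) by move=> sg sg' H; rewrite (T_inv H).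
have f1 : inv_at i (fun sg => g1 (T i sg)) by move=> sg sg' H; rewrite (T_inv H).
rewrite -(Ew_factor pi_sum1 _ f0) -(Ew_factor pi_sum1 _ f1) -EwD.
apply: Ew_eq => sg nz.
have := w_supp i nz; rewrite (SallE i) /g0 /g1.
have := T_ge0 i sg; move: (T i sg) => t t0.
case: (sg i) => [[[] []] []]; rewrite ?H11 ?eqxx // => _; rewrite /a1 /a2 /tot /cnt /=;
  rewrite ?v0 ?mul0r ?add0r ?addr0 //; ring.
Qed.

Lemma lemH2 i A B : 0 <= A -> 0 <= B ->
  ((A + B) * E (T i) + B) *
  (A * E (fun sg => g0 (T i sg)) + B * E (fun sg => g1 (T i sg))) <= (A + B) ^+ 2.
Proof.
move=> A0 B0.
have [AB0|ABn] := eqVneq (A + B) 0.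
  have A00 : A = 0 by lra.
  have B00 : B = 0 by lra.
  by rewrite A00 B00 !mul0r !add0r mulr0 expr0n.
have ABp : 0 < A + B by rewrite lt_neqAle eq_sym ABn addr_ge0.
set a := B / (A + B).
have a01 : 0 <= a <= 1.
  apply/andP; split; first by rewrite divr_ge0 // addr_ge0.
  by rewrite ler_pdivrMr // mul1r lerDr.
have := lemH pi_ge0 pi_sum1 tot_ge0 c_ge0 supp ([set: 'I_n] :\ i) a01.
rewrite -/(T i).
have -> : E (fun sg => h a (TJ tot ([set: 'I_n] :\ i) sg)) =
   (1 - a) * E (fun sg => g0 (T i sg)) + a * E (fun sg => g1 (T i sg)).
  rewrite -!EwZ -EwD; apply: Ew_eq => sg _; rewrite /h /g0 /g1 /T; ring.
have -> : E (TJ tot ([set: 'I_n] :\ i)) = E (T i) by [].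
move=> H.
have e0 : 0 <= E (fun sg => g0 (T i sg)).
  by apply: Ew_ge0 => sg; rewrite /g0 invr_ge0; have := T_ge0 i sg; lra.
have e1 : 0 <= E (fun sg => g1 (T i sg)).
  by apply: Ew_ge0 => sg; rewrite /g1 invr_ge0; have := T_ge0 i sg; lra.
have m0 : 0 <= E (T i) by apply: Ew_ge0 => sg; exact: T_ge0.
move: H e0 e1 m0.
set m := E (T i); set x0 := E (fun sg => g0 (T i sg)); set x1 := E (fun sg => g1 (T i sg)).
move=> H e0 e1 m0.
have E1 : ((A + B) * m + B) * (A * x0 + B * x1)
   = (A + B) ^+ 2 * ((m + a) * ((1 - a) * x0 + a * x1)).
  by rewrite /a; field; rewrite ABn.
rewrite E1 -[X in _ <= X]mulr1 ler_wpM2l // exprn_ge0 // ltW //.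
Qed.

Lemma div_step (s Y : R) : 0 <= s -> (s = 0 -> Y <= 0) -> s * Y <= s ^+ 2 -> Y <= s.
Proof.
move=> s0 H1 H2; have [E0|sn] := eqVneq s 0; first by rewrite E0; apply: H1.
have sp : 0 < s by rewrite lt_neqAle eq_sym sn.
by rewrite -(ler_pM2l sp) -expr2.
Qed.

Definition mu := E Sall.

Lemma EtotE i : E (fun sg => tot (sg i)) = p i + qq i + qp i.
Proof.
rewrite (Ew_at pi_sum1) /p /qq /qp -!big_split /=; apply: eq_bigr => s _.
by rewrite /tot /cnt /xv /yv1 /yv2 !natrD; ring.
Qed.

Lemma ETE i : E (T i) = mu - (p i + qq i + qp i).
Proof.
rewrite /mu -(EtotE i) (@Ew_eq _ _ _ _ Sall (fun sg => tot (sg i) + T i sg)).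
  by rewrite EwD; ring.
by move=> sg _; rewrite (SallE i).
Qed.

Lemma e_facts i : 0 <= E (fun sg => g0 (T i sg)) /\ 0 <= E (fun sg => g1 (T i sg))
  /\ 0 <= E (T i).
Proof.
split; first by apply: Ew_ge0 => sg; rewrite /g0 invr_ge0; have := T_ge0 i sg; lra.
split; first by apply: Ew_ge0 => sg; rewrite /g1 invr_ge0; have := T_ge0 i sg; lra.
by apply: Ew_ge0 => sg; exact: T_ge0.
Qed.

Lemma lemX i : (mu - 1) * E (fun sg => xv (sg i) / Sall sg) <= p i.
Proof.
rewrite decomp; last by rewrite /xv.
have H := lemH2 i (pi_ge0 i (true,false,false)) (pi_ge0 i (true,false,true)).
have [e0 [e1 m0]] := e_facts i.
have mE := ETE i.
move: H e0 e1 m0 mE.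
set m := E (T i); set x0 := E (fun sg => g0 (T i sg)); set x1 := E (fun sg => g1 (T i sg)).
rewrite !sumS3 /a1 /a2 /xv /cnt /= !H11.
have pE : p i = pi i (true,false,false) + pi i (true,false,true).
  by rewrite /p sumS3 /xv /= !H11; ring.
rewrite pE.
set P1 := pi i (true,false,false); set P2 := pi i (true,false,true).
move=> H e0 e1 m0 mE.
have P10 : 0 <= P1 := pi_ge0 i _. 
have P20 : 0 <= P2 := pi_ge0 i _.
have s1 := pi_sum1 i; rewrite sumS3 !H11 in s1.
have g := pi_ge0 i.
have := g (false,false,false); have := g (false,false,true); have := g (false,true,false);
have := g (false,true,true).
move=> ? ? ? ?.
rewrite [X in X * x0](_ : _ = P1); last by ring.
rewrite [X in X * x1](_ : _ = P2); last by ring.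
have Ex0 : 0 <= P1 * x0 + P2 * x1 by rewrite addr_ge0 // mulr_ge0.
apply: (div_step (addr_ge0 P10 P20)).
  move=> s0; have -> : P1 = 0 by lra.
  have -> : P2 = 0 by lra.
  by rewrite !mul0r addr0 mulr0.
apply: le_trans H; rewrite mulrA ler_wpM2r //.
case: (cases i) => [[f1 [f2 [f3 [q0 pq]]]]|[f1 [f2 [qE co]]]].
  have P2z : P2 = 0 by rewrite /P2 f3.
  have : mu - 1 <= m by rewrite mE q0; move: pq; rewrite pE -/P1 -/P2; lra.
  rewrite P2z addr0 => mm.
  by rewrite addr0 ler_wpM2l.
have qpE : qp i = pi i (false,true,true) + P2.
  by rewrite /qp sumS3 /yv2 /= !H11 f2 /P2; ring.
have mm : mu - 1 = m + qp i by rewrite mE qE pE /P1 /P2; ring.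
rewrite mm qpE.
case: co => co.
  have P1z : P1 = 0 by rewrite /P1 co.
  rewrite P1z !add0r.
  have : P2 * pi i (false, true, true) <= P2 * (1 - P2).
    rewrite ler_wpM2l //; lra.
  nra.
rewrite co add0r.
have : (P1 + P2) * P2 <= P2.
  have : P2 * (1 - (P1 + P2)) >= 0 by rewrite mulr_ge0 //; lra.
  nra.
nra.
Qed.

Lemma lemY i : (mu - 1) * E (fun sg => yv (sg i) / Sall sg) <= qq i + qp i.
Proof.
rewrite decomp; last by rewrite /yv.
have Q10 := pi_ge0 i (false,true,false).
have Q20 := pi_ge0 i (true,false,true).
have Q30 := pi_ge0 i (false,true,true).
have H := lemH2 i Q10 (addr_ge0 Q20 Q30).
have F1 := lemH2 i (lexx 0) ler01.
have [e0 [e1 m0]] := e_facts i.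
have mE := ETE i.
move: H F1 e0 e1 m0 mE.
set m := E (T i); set x0 := E (fun sg => g0 (T i sg)); set x1 := E (fun sg => g1 (T i sg)).
rewrite !sumS3 /a1 /a2 /yv /cnt /= !H11.
have s1 := pi_sum1 i; rewrite sumS3 !H11 in s1.
have g := pi_ge0 i.
have := g (false,false,false); have := g (false,false,true); have := g (true,false,false).
move=> ? ? ? H F1 e0 e1 m0 mE.
have qqE : qq i = pi i (false,true,false) + pi i (false,true,true).
  by rewrite /qq sumS3 /yv1 /= !H11; ring.
have qpE : qp i = pi i (false,false,true) + pi i (true,false,true) + pi i (false,true,true).
  by rewrite /qp sumS3 /yv2 /= !H11; ring.
have f001 : pi i (false,false,true) = 0.
  by case: (cases i) => [[f1 _]|[_ [f2 _]]].
rewrite [X in X * x0](_ : _ = pi i (false,true,false)); last by rewrite f001; ring.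
rewrite [X in X * x1](_ : _ = pi i (true,false,true) + 2 * pi i (false,true,true)); last by ring.
move: H F1; rewrite !mul0r !add0r mul1r expr1n.
set Q1 := pi i (false,true,false); set Q2 := pi i (true,false,true); set Q3 := pi i (false,true,true).
move=> H F1.
have x0p : 0 <= Q1 * x0 by rewrite mulr_ge0.
have x1p : 0 <= x1 := e1.
case: (cases i) => [[f1 [f2 [f3 [q0 pq]]]]|[f1 [f2 [qE co]]]].
  have Q2z : Q2 = 0 by rewrite /Q2 f3.
  have Q3z : Q3 = 0 by rewrite /Q3 f2.
  move: H; rewrite Q2z Q3z !addr0 !mul0r !addr0 => H.
  have mm : mu - 1 <= m by rewrite mE q0 addr0; move: pq; lra.
  rewrite qqE q0 -/Q1 -/Q3 Q3z !addr0.
  rewrite mulr0 addr0 mul0r addr0.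
  apply: (div_step Q10).
    by move=> E0; rewrite /Q1 E0 mul0r mulr0.
  apply: le_trans H; rewrite mulrA ler_wpM2r // ler_wpM2l //.
have mm : mu - 1 = m + (Q2 + Q3).
  by rewrite mE qE qpE f001 /Q2 /Q3; lra.
rewrite mm qqE qpE f001 -/Q1 -/Q2 -/Q3.
have P1 : (m + (Q2 + Q3)) * (Q1 * x0 + (Q2 + Q3) * x1) <= Q1 + (Q2 + Q3).
  apply: (div_step (addr_ge0 Q10 (addr_ge0 Q20 Q30))).
    move=> s0; move: s0 Q10 Q20 Q30; rewrite -/Q1 -/Q2 -/Q3 => s0 Q10 Q20 Q30; have -> : Q1 = 0 by lra.
    have -> : Q2 + Q3 = 0 by lra.
    by rewrite !mul0r add0r mulr0.
  apply: le_trans H; rewrite mulrA ler_wpM2r //; first by rewrite addr_ge0 // mulr_ge0 // addr_ge0.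
  have : (Q1 + (Q2 + Q3)) * (Q2 + Q3) <= Q2 + Q3.
    have : (Q2 + Q3) * (1 - (Q1 + (Q2 + Q3))) >= 0.
      apply: mulr_ge0; first by rewrite addr_ge0. by move: s1; rewrite -/Q1 -/Q2 -/Q3; lra.
    nra.
  rewrite -/Q1 -/Q2 -/Q3 => hh; rewrite mulrDr lerD2l; exact: hh.
have P2 : (m + (Q2 + Q3)) * x1 <= 1.
  apply: le_trans F1; rewrite mul1r ler_wpM2r // lerD2l; move: s1 (g (false,true,false)); rewrite -/Q1 -/Q2 -/Q3; lra.
have P3 : (m + (Q2 + Q3)) * (Q3 * x1) <= Q3.
  by rewrite mulrCA -[X in _ <= X]mulr1 ler_wpM2l.
have -> : (m + (Q2 + Q3)) * (Q1 * x0 + (Q2 + 2 * Q3) * x1) =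
   (m + (Q2 + Q3)) * (Q1 * x0 + (Q2 + Q3) * x1) + (m + (Q2 + Q3)) * (Q3 * x1) by ring.
lra.
Qed.

Definition Xs (sg : {ffun 'I_n -> S3}) := \sum_i xv (sg i).
Definition Ys (sg : {ffun 'I_n -> S3}) := \sum_i yv (sg i).

Lemma SallXY sg : Sall sg = Xs sg + Ys sg.
Proof.
rewrite /Sall /TJ /Xs /Ys -big_split /=; apply: eq_big => i //; first by rewrite inE.
by move=> _; rewrite /tot /xv /yv /cnt -natrD addnA.
Qed.

Lemma muxE : E Xs = \sum_i p i.
Proof. by rewrite /Xs Ew_sum; apply: eq_bigr => i _; rewrite (Ew_at pi_sum1). Qed.

Lemma muyE : E Ys = \sum_i (qq i + qp i).
Proof.
rewrite /Ys Ew_sum; apply: eq_bigr => i _; rewrite (Ew_at pi_sum1) /qq /qp -big_split /=.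
by apply: eq_bigr => s _; rewrite /yv /yv1 /yv2 natrD mulrDr.
Qed.

Lemma muE : mu = E Xs + E Ys.
Proof. by rewrite /mu -EwD; apply: Ew_eq => sg _; rewrite SallXY. Qed.

Theorem finite_main : 1 < E Xs + E Ys ->
  E (fun sg => Xs sg / Sall sg) <= E Xs / (E Xs + E Ys - 1) /\
  E (fun sg => Ys sg / Sall sg) <= E Ys / (E Xs + E Ys - 1).
Proof.
rewrite -muE => mu1.
have mp : 0 < mu - 1 by lra.
split; rewrite ler_pdivlMr // mulrC.
  rewrite (@Ew_eq _ _ _ _ _ (fun sg => \sum_i xv (sg i) / Sall sg)); last first.
    by move=> sg _; rewrite /Xs mulr_suml.
  rewrite Ew_sum mulr_sumr muxE; apply: ler_sum => i _; exact: lemX.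
rewrite (@Ew_eq _ _ _ _ _ (fun sg => \sum_i yv (sg i) / Sall sg)); last first.
  by move=> sg _; rewrite /Ys mulr_suml.
rewrite Ew_sum mulr_sumr muyE; apply: ler_sum => i _; exact: lemY.
Qed.
End Final.

End FinDev.

Local Open Scope classical_set_scope.
Local Open Scope ring_scope.

Section Bridge.
Context d (T : measurableType d) (R : realType) (P : probability T R).

Lemma E_fin (I : finType) (f : T -> I) (G : I -> R) :
  (forall i, measurable (f @^-1` [set i])) ->
  ('E_P[fun t => G (f t)] = (\sum_i G i * fine (P (f @^-1` [set i])))%:E)%E.
Proof.
move=> mf; rewrite unlock.
have -> : (fun t => (G (f t))%:E) =
    (fun t => \sum_i ((G i)%:E * (\1_(f @^-1` [set i]) t)%:E))%E.
  apply/funext => t; rewrite (bigD1 (f t)) //= big1.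
    by rewrite indicE mem_set //= mule1 adde0.
  move=> i ni; rewrite indicE memNset ?mule0 //= => E.
  by move/eqP: ni; apply; rewrite E.
rewrite integral_sum //; last first.
  by move=> i; apply: integrableZl => //; exact: integrable_indic.
rewrite -sumEFin; apply: eq_bigr => i _.
rewrite integralZl //; last exact: integrable_indic.
rewrite integral_indic // setIT EFinM fineK //.
exact: fin_num_measure.
Qed.

Lemma bern_eq (x : R) (b : bool) : x = 0 \/ x = 1 -> ((x == 1) = b <-> x = (b : nat)%:R).
Proof.
have h01 : ((0:R) == 1) = false by rewrite eq_sym oner_eq0.
case=> ->; case: b => /=; rewrite ?eqxx ?h01; split => //.
- by move=> /esym/eqP; rewrite oner_eq0.
- by move=> /eqP; rewrite oner_eq0.
Qed.

Lemma bern_val (x : R) : x = 0 \/ x = 1 -> ((x == 1) : nat)%:R = x.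
Proof.
have h01 : ((0:R) == 1) = false by rewrite eq_sym oner_eq0.
by case=> ->; rewrite ?eqxx ?h01.
Qed.
End Bridge.

Section Main.
Context d (T : measurableType d) (R : realType) (P : probability T R) (n : nat)
  (X Y Y' : 'I_n -> {RV P >-> R}).
Hypothesis hb : forall i, bernoulli_valued (X i) /\ bernoulli_valued (Y i)
             /\ bernoulli_valued (Y' i).
Hypothesis hind : indep_triples P (fun i => X i : T -> R) (fun i => Y i : T -> R)
                  (fun i => Y' i : T -> R).

Definition st1 i t : FinDev.S3 := (X i t == 1, Y i t == 1, Y' i t == 1).
Definition bs (b : bool) : set R := [set (b : nat)%:R].

Lemma preim1 i s : st1 i @^-1` [set s] =
  triple_event (fun i => X i : T -> R) (fun i => Y i : T -> R) (fun i => Y' i : T -> R)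
    i (bs s.1.1) (bs s.1.2) (bs s.2).
Proof.
have [hX [hY hY']] := hb i.
case: s => [[a b] c]; apply/seteqP; split => t /=; rewrite /st1 /triple_event /bs /=.
  case=> Ea Eb Ec; split; [split|]; rewrite /preimage /=.
  - by apply/(bern_eq _ (hX t)).
  - by apply/(bern_eq _ (hY t)).
  - by apply/(bern_eq _ (hY' t)).
rewrite /preimage /= => -[[Ea Eb] Ec].
move/(bern_eq _ (hX t)): Ea => ->.
move/(bern_eq _ (hY t)): Eb => ->.
by move/(bern_eq _ (hY' t)): Ec => ->.
Qed.

Lemma mpreim1 i s : measurable (st1 i @^-1` [set s]).
Proof.
rewrite preim1 /triple_event; apply: measurableI; first apply: measurableI;
  apply: measurable_funPTI; exact: measurable_set1.
Qed.

Definition tpi i s := fine (P (st1 i @^-1` [set s])).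

Lemma tpi_ge0 i s : 0 <= tpi i s.
Proof. by rewrite /tpi fine_ge0 // measure_ge0. Qed.

Lemma E_st1 i (G : FinDev.S3 -> R) :
  ('E_P[fun t => G (st1 i t)] = (\sum_s tpi i s * G s)%:E)%E.
Proof.
rewrite E_fin; last exact: mpreim1.
by congr (_%:E); apply: eq_bigr => s _; rewrite mulrC.
Qed.

Lemma tpi_sum1 i : \sum_s tpi i s = 1.
Proof.
have E1 : ((\sum_s tpi i s * 1)%:E = 1%:E)%E.
  by rewrite -(E_st1 i (fun _ => 1)) (_ : (fun t : T => (1:R)) = cst 1) // expectation_cst.
apply: EFin_inj; rewrite -E1; congr (_%:E); by apply: eq_bigr => s _; rewrite mulr1.
Qed.

Definition st t : {ffun 'I_n -> FinDev.S3} := [ffun i => st1 i t].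

Lemma preim sg : st @^-1` [set sg] =
  \bigcap_(i in [set j | j \in [set: 'I_n]%SET])
    triple_event (fun i => X i : T -> R) (fun i => Y i : T -> R) (fun i => Y' i : T -> R)
    i (bs (sg i).1.1) (bs (sg i).1.2) (bs (sg i).2).
Proof.
apply/seteqP; split => t /=.
  move=> E i _; rewrite -preim1 /= -E /st ffunE //.
move=> H; apply/ffunP => i; rewrite /st ffunE.
have := H i; rewrite -preim1; apply; by rewrite /= inE.
Qed.

Lemma mpreim sg : measurable (st @^-1` [set sg]).
Proof.
rewrite preim; apply: fin_bigcap_measurable; first exact: finite_finset.
move=> i _; rewrite -preim1; exact: mpreim1.
Qed.

Lemma wE sg : FinDev.w tpi sg = fine (P (st @^-1` [set sg])).
Proof.
rewrite preim hind; last by move=> i; split; [|split]; exact: measurable_set1.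
rewrite (eq_bigr (fun i => (tpi i (sg i))%:E)); last first.
  move=> i _; rewrite /tpi preim1 fineK //; apply: fin_num_measure.
  by rewrite -preim1; exact: mpreim1.
  rewrite prodEFin /= /FinDev.w; apply: eq_bigl => i; by rewrite inE.
Qed.

Lemma E_st (G : {ffun 'I_n -> FinDev.S3} -> R) :
  ('E_P[fun t => G (st t)] = (FinDev.Ew tpi G)%:E)%E.
Proof.
rewrite E_fin; last exact: mpreim.
by congr (_%:E); apply: eq_bigr => sg _; rewrite wE mulrC.
Qed.
End Main.

Unset Implicit Arguments. Set Strict Implicit. Set Printing Implicit Defensive.

Lemma rr (R : realType) (x y : R) : ratio_right x y = x / (x + y).
Proof. by rewrite /ratio_right; case: eqP => // ->; rewrite invr0 mulr0. Qed.

Lemma rl (R : realType) (x y : R) : ratio_left x y = 1 - y / (x + y).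
Proof.
rewrite /ratio_left; case: eqP => [->|h]; first by rewrite invr0 mulr0 subr0.
by field; apply/eqP.
Qed.

Theorem theorem4 (d : measure_display) (T : measurableType d) (R : realType)
  (P : probability T R) (n : nat) (X Y Y' : 'I_n -> {RV P >-> R}) :
  (forall i, bernoulli_valued (X i) /\ bernoulli_valued (Y i)
             /\ bernoulli_valued (Y' i)) ->
  indep_triples P (fun i => X i : T -> R) (fun i => Y i : T -> R)
                  (fun i => Y' i : T -> R) ->
  let p := fun i => fine ('E_P[X i])%E in
  let q := fun i => fine ('E_P[Y i])%E in
  let q' := fun i => fine ('E_P[Y' i])%E in
  (forall i, ('E_P[X i \* Y i] = 0)%E) ->
  (forall i, q' i = 0 \/
     (q i = 1 - p i /\
      exists theta : {RV P >-> R},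
        (forall A : set R, measurable A ->
           P (theta @^-1` A) = uniform_prob (@ltr01 R) A) /\
        (forall t, X i t = if theta t < p i then 1 else 0) /\
        (forall t, Y' i t = if theta t < q' i then 1 else 0))) ->
  let Xs := fun t => \sum_(i < n) X i t in
  let Ys := fun t => \sum_(i < n) (Y i t + Y' i t) in
  let mux := fine ('E_P[Xs])%E in
  let muy := fine ('E_P[Ys])%E in
  mux + muy > 1 ->
  (((mux - 1) / (mux + muy - 1))%:E
     <= 'E_P[fun t => ratio_left (Xs t) (Ys t)])%E /\
  ('E_P[fun t => ratio_right (Xs t) (Ys t)]
     <= (mux / (mux + muy - 1))%:E)%E.
Proof.
move=> hb hind p q q' hXY hcase Xs Ys mux muy hmu.
pose pi0 := tpi X Y Y'.
have ge0 : forall i s, 0 <= pi0 i s by move=> i s; exact: tpi_ge0.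
have s1 : forall i, \sum_s pi0 i s = 1 by move=> i; exact: tpi_sum1 hb i.
have Xv i t : X i t = FinDev.xv R (st1 X Y Y' i t).
  by rewrite /FinDev.xv /st1 /= bern_val //; case: (hb i) => hX _; exact: hX.
have Yv i t : Y i t = FinDev.yv1 R (st1 X Y Y' i t).
  by rewrite /FinDev.yv1 /st1 /= bern_val //; case: (hb i) => _ [hY _]; exact: hY.
have Y'v i t : Y' i t = FinDev.yv2 R (st1 X Y Y' i t).
  by rewrite /FinDev.yv2 /st1 /= bern_val //; case: (hb i) => _ [_ hY]; exact: hY.
have pE i : p i = FinDev.p pi0 i.
  rewrite /p (_ : (X i : T -> R) = fun t => FinDev.xv R (st1 X Y Y' i t)).
    by rewrite E_st1.
  by apply/funext => t; rewrite Xv.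
have qE i : q i = FinDev.qq pi0 i.
  rewrite /q (_ : (Y i : T -> R) = fun t => FinDev.yv1 R (st1 X Y Y' i t)).
    by rewrite E_st1.
  by apply/funext => t; rewrite Yv.
have q'E i : q' i = FinDev.qp pi0 i.
  rewrite /q' (_ : (Y' i : T -> R) = fun t => FinDev.yv2 R (st1 X Y Y' i t)).
    by rewrite E_st1.
  by apply/funext => t; rewrite Y'v.
have H11 : forall i b, pi0 i (true, true, b) = 0.
  move=> i.
  have Hs0 := hXY i.
  rewrite (_ : (X i \* Y i)%R =
     fun t => FinDev.xv R (st1 X Y Y' i t) * FinDev.yv1 R (st1 X Y Y' i t)) in Hs0; last first.
    by apply/funext => t; rewrite /= Xv Yv.
  rewrite (E_st1 hb i (fun s => FinDev.xv R s * FinDev.yv1 R s)) in Hs0.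
  have Hs := EFin_inj Hs0.
  rewrite FinDev.sumS3 /FinDev.xv /FinDev.yv1 /= in Hs.
  have := ge0 i (true,true,true); have := ge0 i (true,true,false).
  rewrite -/pi0 in Hs.
  by move=> ? ? [] ; lra.
have Hcase : forall i, FinDev.qp pi0 i = 0 \/ (FinDev.qq pi0 i = 1 - FinDev.p pi0 i /\
    (pi0 i (true, false, false) = 0 \/ pi0 i (false, true, true) = 0)).
  move=> i; case: (hcase i) => [h0|[hq [theta [_ [hX hY']]]]].
    by left; rewrite -q'E.
  right; split; first by rewrite -qE -pE.
  have h01 : ((0:R) == 1) = false by rewrite eq_sym oner_eq0.
  case: (lerP (p i) (q' i)) => hpq; [left|right]; rewrite /pi0 /tpi.
    rewrite (_ : _ @^-1` _ = set0) ?measure0 //.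
    apply/seteqP; split => t //=; rewrite /st1 => -[] E1 E2 E3.
    move: E1; rewrite hX; case: ifPn => ht; last by rewrite h01.
    move: E3; rewrite hY' ifT ?eqxx //.
    by apply: lt_le_trans hpq.
  rewrite (_ : _ @^-1` _ = set0) ?measure0 //.
  apply/seteqP; split => t //=; rewrite /st1 => -[] E1 E2 E3.
  move: E3; rewrite hY'; case: ifPn => ht; last by rewrite h01.
  move: E1; rewrite hX ifT ?eqxx //.
  by apply: lt_trans hpq.
have Xst t : Xs t = FinDev.Xs R (st X Y Y' t).
  by rewrite /Xs /FinDev.Xs; apply: eq_bigr => i _; rewrite /st ffunE Xv.
have Yst t : Ys t = FinDev.Ys R (st X Y Y' t).
  rewrite /Ys /FinDev.Ys; apply: eq_bigr => i _.
  by rewrite /st ffunE Yv Y'v /FinDev.yv /FinDev.yv1 /FinDev.yv2 natrD.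
have muxE : mux = FinDev.Ew pi0 (@FinDev.Xs R n).
  rewrite /mux (_ : Xs = fun t => FinDev.Xs R (st X Y Y' t)); last by apply/funext => t; rewrite Xst.
  by rewrite (E_st hb hind (@FinDev.Xs R n)).
have muyE : muy = FinDev.Ew pi0 (@FinDev.Ys R n).
  rewrite /muy (_ : Ys = fun t => FinDev.Ys R (st X Y Y' t)); last by apply/funext => t; rewrite Yst.
  by rewrite (E_st hb hind (@FinDev.Ys R n)).
have key := FinDev.finite_main ge0 s1 H11 Hcase.
have hmu' : 1 < FinDev.Ew pi0 (@FinDev.Xs R n) + FinDev.Ew pi0 (@FinDev.Ys R n).
  by rewrite -muxE -muyE.
case: (key hmu') => kX kY.
rewrite -muxE -muyE in kX kY.
have ER : ('E_P[fun t => ratio_right (Xs t) (Ys t)] =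
    (FinDev.Ew pi0 (fun sg => FinDev.Xs R sg / FinDev.Sall R sg))%:E)%E.
  rewrite -(E_st hb hind); congr ('E_P[_])%E; apply/funext => t.
  by rewrite rr Xst Yst -FinDev.SallXY.
have EL : ('E_P[fun t => ratio_left (Xs t) (Ys t)] =
    (1 - FinDev.Ew pi0 (fun sg => FinDev.Ys R sg / FinDev.Sall R sg))%:E)%E.
  rewrite (_ : (fun t => ratio_left (Xs t) (Ys t)) =
     fun t => (fun sg => 1 - FinDev.Ys R sg / FinDev.Sall R sg) (st X Y Y' t)); last first.
    by apply/funext => t; rewrite rl Xst Yst -FinDev.SallXY.
  rewrite (E_st hb hind (fun sg => 1 - FinDev.Ys R sg / FinDev.Sall R sg)); congr (_%:E).
  have W1 := FinDev.Ew1 s1.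
  rewrite /FinDev.Ew in W1 *.
  under eq_bigr do rewrite mulrBr mulr1.
  by rewrite sumrB -W1; congr (_ - _); apply: eq_bigr => sg _; rewrite mulr1.
have D0 : 0 < mux + muy - 1 by lra.
split.
  rewrite EL lee_fin.
  have -> : (mux - 1) / (mux + muy - 1) = 1 - muy / (mux + muy - 1).
    by field; rewrite gt_eqF.
  by rewrite lerD2l lerN2.
by rewrite ER lee_fin.
Qed.
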